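(* Let $t$ be an $\mathrm{SL}_2$-tiling and let $i\le j$, $p\le q$ be integers, not both $i=j$ and $p=q$, such that $t_{jp}=t_{iq}=1$. Then there is a friese on the diagonal band $D=\{(x,y)\in\mathbb{Z}^2: i-q\le x-y\le j-p\}$ which agrees with $t$ on the rectangle $R=\{(x,y)\in\mathbb{Z}^2: i\le x\le j,\ p\le y\le q\}$.
   Context: An $\mathrm{SL}_2$-tiling is a map $t:\mathbb{Z}\times\mathbb{Z}\to\{1,2,3,\dots\}$, $(i,j)\mapsto t_{ij}$, with $t_{ij}t_{i+1,j+1}-t_{i,j+1}t_{i+1,j}=1$ for all $i,j$. A partial $\mathrm{SL}_2$-tiling defined on $E\subseteq\mathbb{Z}^2$ is a map $t:E\to\{1,2,3,\dots\}$ such that $t_{xy}t_{x+1,y+1}-t_{x,y+1}t_{x+1,y}=1$ whenever all four points $(x,y),(x,y+1),(x+1,y),(x+1,y+1)$ lie in $E$. For integers $c<c'$, a friese on the diagonal band $\{(x,y)\in\mathbb{Z}^2: c\le x-y\le c'\}$ is a partial $\mathrm{SL}_2$-tiling defined on this band with value $1$ at every point with $x-y=c$ or $x-y=c'$. *)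

(* Defs.v *)
From Stdlib Require Import ZArith.
Open Scope Z_scope.

Definition is_SL2_tiling (t : Z -> Z -> Z) : Prop :=
  (forall i j, 1 <= t i j) /\
  (forall i j, t i j * t (i+1) (j+1) - t i (j+1) * t (i+1) j = 1).

Definition in_band (c c' x y : Z) : Prop := c <= x - y <= c'.

(* A partial SL2-tiling defined on a set E (given as a predicate); a map
   Z -> Z -> Z whose values outside E are irrelevant. *)
Definition is_partial_SL2_tiling (E : Z -> Z -> Prop) (f : Z -> Z -> Z) : Prop :=
  (forall x y, E x y -> 1 <= f x y) /\
  (forall x y, E x y -> E x (y+1) -> E (x+1) y -> E (x+1) (y+1) ->
     f x y * f (x+1) (y+1) - f x (y+1) * f (x+1) y = 1).

Definition is_friese (c c' : Z) (f : Z -> Z -> Z) : Prop :=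
  c < c' /\
  is_partial_SL2_tiling (in_band c c') f /\
  (forall x y, x - y = c -> f x y = 1) /\
  (forall x y, x - y = c' -> f x y = 1).

(* Main.v *)
Require Import Defs.
From Stdlib Require Import ZArith Lia.
Open Scope Z_scope.

Definition det2 (u v : Z*Z) : Z := fst u * snd v - snd u * fst v.
Definition scale (e : Z) (u : Z*Z) : Z*Z := (e * fst u, e * snd u).
Definition Bv (t : Z -> Z -> Z) (i y : Z) : Z*Z := (t i y, t (i+1) y).
Definition Av (t : Z -> Z -> Z) (i p x : Z) : Z*Z :=
  (t i (p+1) * t x p - t i p * t x (p+1), t (i+1) (p+1) * t x p - t (i+1) p * t x (p+1)).
Definition sgn (n : Z) : Z := if Z.even n then 1 else -1.
Definition wv t i p q (m : Z) : Z*Z :=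
  if m <? q - p + 1 then Bv t i (p + m) else Av t i p (i + m - (q - p + 1)).
Definition vv t i j p q (k : Z) : Z*Z :=
  scale (sgn ((k - p) / (j - i + q - p + 2))) (wv t i p q ((k - p) mod (j - i + q - p + 2))).
Definition ff t i j p q (x y : Z) : Z := det2 (vv t i j p q y) (vv t i j p q (x - i + q + 1)).

Lemma Zind_from (P : Z -> Prop) (z0 : Z) :
  P z0 -> (forall z, P z -> P (z+1)) -> (forall z, P (z+1) -> P z) -> forall z, P z.
Proof.
  intros H0 Hu Hd z.
  replace z with (z0 + (z - z0)) by ring.
  induction (z - z0) as [|w IH|w IH] using Z.peano_ind.
  - rewrite Z.add_0_r; exact H0.
  - replace (z0 + Z.succ w) with ((z0 + w) + 1) by lia. auto.
  - apply Hd. replace (z0 + Z.pred w + 1) with (z0 + w) by lia. auto.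
Qed.

Lemma S_rel t : is_SL2_tiling t -> forall x y,
  t x y * (t (x+1) (y-1) + t (x+1) (y+1)) = t (x+1) y * (t x (y-1) + t x (y+1)).
Proof.
  intros [_ H] x y.
  pose proof (H x (y-1)) as H1; pose proof (H x y) as H2.
  replace (y-1+1) with y in H1 by ring. lia.
Qed.

Lemma ratio t : is_SL2_tiling t -> forall i x y,
  t i y * (t x (y-1) + t x (y+1)) = t x y * (t i (y-1) + t i (y+1)).
Proof.
  intros Ht i x y. pose proof (proj1 Ht) as Hp.
  revert x. apply (Zind_from _ i).
  - ring.
  - intros x IH. pose proof (S_rel t Ht x y) as E.
    pose proof (Hp x y). pose proof (Hp i y). pose proof (Hp (x+1) y).
    apply (Z.mul_reg_l _ _ (t x y)); [lia|]. nia.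
  - intros x IH. pose proof (S_rel t Ht x y) as E.
    pose proof (Hp x y). pose proof (Hp i y). pose proof (Hp (x+1) y).
    apply (Z.mul_reg_l _ _ (t (x+1) y)); [lia|]. nia.
Qed.

Lemma rank t : is_SL2_tiling t -> forall i p x y, det2 (Bv t i y) (Av t i p x) = t x y.
Proof.
  intros Ht i p x. pose proof (proj1 Ht) as Hp. pose proof (proj2 Ht) as Hs.
  set (g := fun y => t x y - det2 (Bv t i y) (Av t i p x)).
  assert (Rec : forall y, t i y * (g (y-1) + g (y+1)) = (t i (y-1) + t i (y+1)) * g y).
  { intros y. unfold g, det2, Bv, Av; simpl.
    pose proof (ratio t Ht i x y) as R1. pose proof (ratio t Ht i (i+1) y) as R2.
    generalize (t (i + 1) (p + 1) * t x p - t (i + 1) p * t x (p + 1)) as W.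
    generalize (t i (p + 1) * t x p - t i p * t x (p + 1)) as U.
    intros U W.
    apply Zminus_eq. transitivity ((t i y * (t x (y - 1) + t x (y + 1)) - t x y * (t i (y - 1) + t i (y + 1))) + U * (t i y * (t (i + 1) (y - 1) + t (i + 1) (y + 1)) - t (i + 1) y * (t i (y - 1) + t i (y + 1)))).
    - ring.
    - rewrite R1, R2. ring. }
  assert (G : forall y, g y = 0 /\ g (y+1) = 0).
  { apply (Zind_from _ p).
    - unfold g, det2, Bv, Av; simpl. pose proof (Hs i p) as E. split.
      + transitivity (t x p * (1 - (t i p * t (i + 1) (p + 1) - t i (p + 1) * t (i + 1) p))).
        ring. rewrite E. ring.
      + transitivity (t x (p+1) * (1 - (t i p * t (i + 1) (p + 1) - t i (p + 1) * t (i + 1) p))).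
        ring. rewrite E. ring.
    - intros z [H1 H2]. split; auto.
      pose proof (Rec (z+1)) as R. replace (z+1-1) with z in R by ring.
      rewrite H1, H2 in R. pose proof (Hp i (z+1)). nia.
    - intros z [H1 H2]. split; auto.
      pose proof (Rec (z+1)) as R. replace (z+1-1) with z in R by ring.
      rewrite H1, H2 in R. pose proof (Hp i (z+1)). nia. }
  intros y. destruct (G y) as [G1 _]. unfold g in G1. lia.
Qed.

Lemma mono (g h : Z -> Z) : (forall k, 1 <= g k) -> (forall k, 1 <= h k) ->
  (forall k, g k * h (k+1) - h k * g (k+1) = 1) ->
  forall k m, k < m -> 1 <= g k * h m - h k * g m.
Proof.
  intros Hg Hh Hd k m Hkm.
  assert (A : forall n : nat, 1 <= g k * h (k+1+Z.of_nat n) - h k * g (k+1+Z.of_nat n)).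
  { induction n as [|n IH].
    - simpl. rewrite Z.add_0_r. rewrite Hd. lia.
    - rewrite Nat2Z.inj_succ. set (m' := k+1+Z.of_nat n) in *.
      replace (k + 1 + Z.succ (Z.of_nat n)) with (m'+1) by (unfold m'; lia).
      pose proof (Hd m') as D. pose proof (Hg k). pose proof (Hg m'). pose proof (Hg (m'+1)).
      pose proof (Hh k). pose proof (Hh m'). pose proof (Hh (m'+1)).
      assert (E : g m' * (g k * h (m'+1) - h k * g (m'+1)) =
                  g k + g (m'+1) * (g k * h m' - h k * g m')).
      { transitivity (g k * (g m' * h (m' + 1) - h m' * g (m' + 1)) + g (m'+1) * (g k * h m' - h k * g m')).
        ring. rewrite D. ring. }
      nia. }
  replace m with (k+1+Z.of_nat (Z.to_nat (m-k-1))) by lia. apply A.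
Qed.

Lemma det_scale e e' u v : det2 (scale e u) (scale e' v) = e * e' * det2 u v.
Proof. destruct u, v; unfold det2, scale; simpl; ring. Qed.
Lemma det_scale_r e u v : det2 u (scale e v) = e * det2 u v.
Proof. destruct u, v; unfold det2, scale; simpl; ring. Qed.
Lemma det_anti u v : det2 u v = - det2 v u.
Proof. destruct u, v; unfold det2; simpl; ring. Qed.
Lemma plucker u1 u2 u3 u4 :
  det2 u1 u3 * det2 u2 u4 - det2 u2 u3 * det2 u1 u4 = det2 u1 u2 * det2 u3 u4.
Proof. destruct u1, u2, u3, u4; unfold det2; simpl; ring. Qed.
Lemma sgn_mul a b : sgn (a + b) = sgn a * sgn b.
Proof. unfold sgn. rewrite Z.even_add. destruct (Z.even a), (Z.even b); reflexivity. Qed.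
Lemma sgn_sq a : sgn a * sgn a = 1.
Proof. unfold sgn. destruct (Z.even a); reflexivity. Qed.
Lemma scale_scale e e' u : scale e (scale e' u) = scale (e * e') u.
Proof. destruct u; unfold scale; simpl; f_equal; ring. Qed.

Lemma vv_window t i j p q k : i <= j -> p <= q -> p <= k < p + (j - i + q - p + 2) ->
  vv t i j p q k = wv t i p q (k - p).
Proof.
  intros. unfold vv. rewrite Z.div_small by lia. rewrite Z.mod_small by lia.
  destruct (wv t i p q (k-p)) as [z z0]. unfold scale, sgn; simpl. destruct z, z0; reflexivity.
Qed.

Lemma vv_shift t i j p q z n : i <= j -> p <= q ->
  vv t i j p q (z + n * (j - i + q - p + 2)) = scale (sgn n) (vv t i j p q z).
Proof.
  intros. unfold vv. set (N := j - i + q - p + 2).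
  replace (z + n * N - p) with ((z - p) + n * N) by ring.
  rewrite Z.div_add by (unfold N; lia). rewrite Z.mod_add by (unfold N; lia).
  rewrite scale_scale, sgn_mul. f_equal. ring.
Qed.

Lemma detAA t : is_SL2_tiling t -> forall i p x x',
  det2 (Av t i p x) (Av t i p x') = t x p * t x' (p+1) - t x (p+1) * t x' p.
Proof.
  intros [_ Hs] i p x x'. unfold det2, Av; simpl.
  transitivity ((t i p * t (i + 1) (p + 1) - t i (p + 1) * t (i + 1) p) *
     (t x p * t x' (p+1) - t x (p+1) * t x' p)). ring. rewrite Hs. ring.
Qed.

Lemma window_pair t i j p q : is_SL2_tiling t -> i <= j -> p <= q ->
  t j p = 1 -> t i q = 1 -> forall a b, p <= a < b -> b < p + (j - i + q - p + 2) ->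
  1 <= det2 (vv t i j p q a) (vv t i j p q b) /\
  (b = a + 1 -> det2 (vv t i j p q a) (vv t i j p q b) = 1).
Proof.
  intros Ht Hij Hpq Hjp Hiq a b Ha Hb.
  pose proof (proj1 Ht) as Hp. pose proof (proj2 Ht) as Hs.
  rewrite !vv_window by lia. unfold wv.
  destruct (Z.ltb_spec (a-p) (q-p+1)), (Z.ltb_spec (b-p) (q-p+1)).
  - replace (p + (a-p)) with a by ring. replace (p + (b-p)) with b by ring.
    unfold det2, Bv; simpl. split.
    + apply (mono (t i) (t (i+1))); [intro; apply Hp | intro; apply Hp | intro k; pose proof (Hs i k); pose proof (Hs k p); lia | lia].
    + intros ->. pose proof (Hs i a); lia.
  - rewrite rank by exact Ht. split; [apply Hp|].
    intros ->. replace (i + (a + 1 - p) - (q - p + 1)) with i by lia.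
    replace (p + (a - p)) with q by lia. exact Hiq.
  - lia.
  - rewrite detAA by exact Ht. split.
    + apply (mono (fun x => t x p) (fun x => t x (p+1))); [intro; apply Hp | intro; apply Hp | intro k; pose proof (Hs i k); pose proof (Hs k p); lia | lia].
    + intros ->. replace (i + (a + 1 - p) - (q - p + 1)) with ((i + (a - p) - (q - p + 1)) + 1) by ring.
      apply Hs.
Qed.

Lemma wrap t i j p q : is_SL2_tiling t -> i <= j -> p <= q ->
  t j p = 1 -> det2 (vv t i j p q p) (vv t i j p q (p + (j - i + q - p + 2) - 1)) = 1.
Proof.
  intros Ht Hij Hpq Hjp.
  rewrite !vv_window by lia. unfold wv.
  destruct (Z.ltb_spec (p-p) (q-p+1)); [|lia].
  destruct (Z.ltb_spec (p + (j - i + q - p + 2) - 1 - p) (q-p+1)); [lia|].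
  rewrite rank by exact Ht.
  replace (i + (p + (j - i + q - p + 2) - 1 - p) - (q - p + 1)) with j by ring.
  replace (p + (p - p)) with p by ring. exact Hjp.
Qed.

Lemma gen t i j p q : is_SL2_tiling t -> i <= j -> p <= q ->
  t j p = 1 -> t i q = 1 -> forall k d, 1 <= d <= j - i + q - p + 1 ->
  1 <= det2 (vv t i j p q k) (vv t i j p q (k + d)) /\
  (d = 1 -> det2 (vv t i j p q k) (vv t i j p q (k + d)) = 1).
Proof.
  intros Ht Hij Hpq Hjp Hiq k d Hd.
  set (N := j - i + q - p + 2).
  assert (HN : 0 < N) by (unfold N; lia).
  set (n := (k - p) / N). set (k0 := p + (k - p) mod N).
  assert (Hk : k = k0 + n * N).
  { unfold k0, n. pose proof (Z.div_mod (k - p) N). lia. }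
  assert (Hk0 : p <= k0 < p + N).
  { unfold k0. pose proof (Z.mod_pos_bound (k - p) N HN). lia. }
  assert (E : forall e, det2 (vv t i j p q (k0 + n * N)) (vv t i j p q (k0 + e + n * N))
                = det2 (vv t i j p q k0) (vv t i j p q (k0 + e))).
  { intros e. unfold N. rewrite !vv_shift by lia. rewrite det_scale, sgn_sq. ring. }
  replace (k + d) with (k0 + d + n * N) by lia. rewrite Hk. rewrite E.
  clear E Hk n.
  destruct (Z_lt_ge_dec (k0 + d) (p + N)).
  - destruct (window_pair t i j p q Ht Hij Hpq Hjp Hiq k0 (k0 + d)) as [W1 W2]; lia.
  - replace (k0 + d) with ((k0 + d - N) + 1 * N) by ring.
    unfold N. rewrite vv_shift by lia. fold N.
    rewrite det_scale_r. unfold sgn; simpl Z.even; cbv iota.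
    rewrite (det_anti (vv t i j p q k0)).
    destruct (window_pair t i j p q Ht Hij Hpq Hjp Hiq (k0 + d - N) k0) as [W1 W2]; try lia.
    split; [lia|]. intros ->.
    replace k0 with (p + N - 1) by lia. replace (p + N - 1 + 1 - N) with p by ring.
    unfold N. rewrite wrap; auto.
Qed.

Theorem proposition7p2 (t : Z -> Z -> Z) (i j p q : Z) :
  is_SL2_tiling t ->
  i <= j -> p <= q -> ~ (i = j /\ p = q) ->
  t j p = 1 -> t i q = 1 ->
  exists f : Z -> Z -> Z,
    is_friese (i - q) (j - p) f /\
    (forall x y, i <= x <= j -> p <= y <= q -> f x y = t x y).
Proof.
  intros Ht Hij Hpq Hne Hjp Hiq.
  pose proof (gen t i j p q Ht Hij Hpq Hjp Hiq) as G.
  assert (C : forall k, det2 (vv t i j p q k) (vv t i j p q (k + 1)) = 1).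
  { intros k. apply (G k 1); lia. }
  exists (ff t i j p q). split.
  - unfold is_friese, is_partial_SL2_tiling, in_band. split; [lia|]. split; [split|split].
    + intros x y Hb. unfold ff.
      replace (x - i + q + 1) with (y + (x - i + q + 1 - y)) by ring.
      apply G. lia.
    + intros x y _ _ _ _. unfold ff.
      replace (x + 1 - i + q + 1) with ((x - i + q + 1) + 1) by ring.
      rewrite plucker. rewrite !C. ring.
    + intros x y Hxy. unfold ff.
      replace (x - i + q + 1) with (y + 1) by lia. apply C.
    + intros x y Hxy. unfold ff.
      replace (x - i + q + 1) with ((y - 1) + 1 * (j - i + q - p + 2)) by lia.
      rewrite vv_shift by lia. rewrite det_scale_r. unfold sgn; simpl Z.even; cbv iota.
      rewrite det_anti. pose proof (C (y - 1)) as Cy. replace (y - 1 + 1) with y in Cy by ring.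
      lia.
  - intros x y Hx Hy. unfold ff.
    rewrite !vv_window by lia. unfold wv.
    destruct (Z.ltb_spec (y - p) (q - p + 1)); [|lia].
    destruct (Z.ltb_spec (x - i + q + 1 - p) (q - p + 1)); [lia|].
    rewrite rank by exact Ht.
    replace (i + (x - i + q + 1 - p) - (q - p + 1)) with x by ring.
    replace (p + (y - p)) with y by ring. reflexivity.
Qed.
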